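(* Let $I$ be an index set, and for each $i\in I$ let $x_i$ be an independent variable and $J_i$ a constant $N\times N$ matrix, with $[J_i,J_j]=0$ for all $i,j$. Let $G_{ij}$ ($i\neq j\in I$) be smooth $N\times N$ matrix functions of the variables $x_i$. For pairwise distinct $i,j,k$ define $$\mathcal L_{ijk}=\tfrac12\operatorname{tr}\Big\{G_{ij}J_i(\partial_kG_{ji})J_j-(\partial_kG_{ij})J_iG_{ji}J_j+G_{jk}J_j(\partial_iG_{kj})J_k-(\partial_iG_{jk})J_jG_{kj}J_k+G_{ki}J_k(\partial_jG_{ik})J_i-(\partial_jG_{ki})J_kG_{ik}J_i\Big\}-\operatorname{tr}\Big\{G_{ij}J_iG_{ki}J_kG_{jk}J_j-G_{ji}J_jG_{kj}J_kG_{ik}J_i\Big\},$$ and the 3-form $\mathsf L=\sum_{i<j<k}\mathcal L_{ijk}\,dx_i\wedge dx_j\wedge dx_k$ (for a fixed total order on $I$). Set $\Gamma_{i;j,k}=\partial_iG_{jk}-G_{ik}J_iG_{ji}$. Then $d\mathsf L$ has a double zero on solutions of the system $\partial_iG_{jk}=G_{ik}J_iG_{ji}$ ($i,j,k$ pairwise distinct): each coefficient of $d\mathsf L$ with respect to $dx_i\wedge dx_j\wedge dx_k\wedge dx_l$ is a linear combination, with constant coefficients, of traces of products containing exactly two factors of the form $\Gamma_{a;b,c}$ (with $a,b,c$ among $i,j,k,l$) and otherwise only constant matrices $J$. In particular $d\mathsf L=0$ on solutions of this system.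
   Context: $\partial_i=\partial/\partial x_i$; $\operatorname{tr}$ is the matrix trace. *)

(* Defs.v *)
From HB Require Import structures.
From mathcomp Require Import all_boot all_order all_algebra.
From mathcomp Require Import all_classical all_reals all_analysis.
Set Implicit Arguments. Unset Strict Implicit. Unset Printing Implicit Defensive.
Import Order.TTheory GRing.Theory Num.Theory.
Import numFieldNormedType.Exports.
Local Open Scope ring_scope.

Section Defs.
Variables (R : realType) (n N : nat).

(* Points of the space of independent variables (x_i)_{i in 'I_n}. *)
Notation pt := 'rV[R]_n.
Notation mx := 'M[R]_N.

Definition ev (i : 'I_n) : pt := delta_mx 0 i.

Definition pd {V : normedModType R} (i : 'I_n) (F : pt -> V) : pt -> V :=
  fun x => 'D_(ev i) F x.

Fixpoint pds {V : normedModType R} (s : seq 'I_n) (F : pt -> V) : pt -> V :=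
  match s with [::] => F | i :: s' => pd i (pds s' F) end.

Definition smooth {V : normedModType R} (F : pt -> V) : Prop :=
  forall s : seq 'I_n, continuous (pds s F) /\
    forall (i : 'I_n) (x : pt), derivable (pds s F) x (ev i).

Definition Lcoef (J : 'I_n -> mx) (G : 'I_n -> 'I_n -> pt -> mx)
    (i j k : 'I_n) (x : pt) : R :=
  2^-1 * \tr (G i j x *m J i *m pd k (G j i) x *m J j
            - pd k (G i j) x *m J i *m G j i x *m J j
            + G j k x *m J j *m pd i (G k j) x *m J k
            - pd i (G j k) x *m J j *m G k j x *m J k
            + G k i x *m J k *m pd j (G i k) x *m J i
            - pd j (G k i) x *m J k *m G i k x *m J i)
  - \tr (G i j x *m J i *m G k i x *m J k *m G j k x *m J j
       - G j i x *m J j *m G k j x *m J k *m G i k x *m J i).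

Definition Gam (J : 'I_n -> mx) (G : 'I_n -> 'I_n -> pt -> mx)
    (i j k : 'I_n) (x : pt) : mx :=
  pd i (G j k) x - G i k x *m J i *m G j i x.

(* Coefficient of dx_i/\dx_j/\dx_k/\dx_l (i<j<k<l) in dw, where w is the
   3-form sum_{a<b<c} w a b c dx_a/\dx_b/\dx_c. *)
Definition d3coef (w : 'I_n -> 'I_n -> 'I_n -> pt -> R) (i j k l : 'I_n)
    (x : pt) : R :=
  pd i (w j k l) x - pd j (w i k l) x + pd k (w i j l) x - pd l (w i j k) x.

End Defs.

Inductive trfactor (n : nat) :=
  | FGam of 'I_n & 'I_n & 'I_n
  | FJ of 'I_n.

Definition eval_factor (R : realType) (n N : nat) (J : 'I_n -> 'M[R]_N)
    (G : 'I_n -> 'I_n -> 'rV[R]_n -> 'M[R]_N) (x : 'rV[R]_n)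
    (f : trfactor n) : 'M[R]_N :=
  match f with
  | FGam a b c => Gam J G a b c x
  | FJ a => J a
  end.

Definition eval_word (R : realType) (n N : nat) (J : 'I_n -> 'M[R]_N)
    (G : 'I_n -> 'I_n -> 'rV[R]_n -> 'M[R]_N) (x : 'rV[R]_n)
    (w : seq (trfactor n)) : 'M[R]_N :=
  foldr (fun f M => eval_factor J G x f *m M) 1%:M w.

Definition is_gam (n : nat) (f : trfactor n) : bool :=
  if f is FGam _ _ _ then true else false.

Definition admissible (n : nat) (i j k l : 'I_n) (w : seq (trfactor n)) : bool :=
  let S := [:: i; j; k; l] in
  (count (@is_gam n) w == 2)%N &&
  all (fun f => match f with
                | FGam a b c => [&& a \in S, b \in S, c \in S,
                                    a != b, b != c & a != c]
                | FJ a => a \in S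
                end) w.

(* Main.v *)
Require Import Defs.
From HB Require Import structures.
From mathcomp Require Import all_boot all_order all_algebra.
From mathcomp Require Import all_classical all_reals all_analysis.
From mathcomp Require Import ring lra.
Set Implicit Arguments. Unset Strict Implicit. Unset Printing Implicit Defensive.
Import Order.TTheory GRing.Theory Num.Theory.
Import numFieldNormedType.Exports.
Local Open Scope ring_scope.

Section Line.
Variables (R : realType) (V W : normedModType R).

Lemma line_quot (f : V -> W) y u s :
  (fun h : R => h^-1 *: (((fun t : R => f (t *: u + y)) \o shift s) (h *: 1) - f (s *: u + y)))
  = (fun h : R => h^-1 *: ((f \o shift (s *: u + y)) (h *: u) - f (s *: u + y))).
Proof.
apply/funext => h /=; congr (_ *: (f _ - _)).
by rewrite [_%:A]mulr1 scalerDl addrA.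
Qed.

Lemma derivable_line (f : V -> W) y u s :
  derivable (fun t : R => f (t *: u + y)) s 1 = derivable f (s *: u + y) u.
Proof. by rewrite /derivable line_quot. Qed.

Lemma derive_line (f : V -> W) y u s :
  'D_1 (fun t : R => f (t *: u + y)) s = 'D_u f (s *: u + y).
Proof. by rewrite /derive line_quot. Qed.

Lemma shift_quot (f : V -> W) c u z :
  (fun h : R => h^-1 *: (((fun w => f (w + c)) \o shift z) (h *: u) - f (z + c)))
  = (fun h : R => h^-1 *: ((f \o shift (z + c)) (h *: u) - f (z + c))).
Proof. by apply/funext => h /=; rewrite addrA. Qed.

Lemma derivable_shift (f : V -> W) c u z :
  derivable (fun w => f (w + c)) z u = derivable f (z + c) u.
Proof. by rewrite /derivable shift_quot. Qed.

Lemma derive_shift' (f : V -> W) c u z :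
  'D_u (fun w => f (w + c)) z = 'D_u f (z + c).
Proof. by rewrite /derive shift_quot. Qed.
End Line.

Section MVTdir.
Variables (R : realType) (V : normedModType R).
Local Open Scope classical_set_scope.

Lemma mvt_dir (f : V -> R) u y (h : R) : (forall z, derivable f z u) -> 0 < h ->
  exists2 s, 0 < s < h & f (h *: u + y) - f y = h * 'D_u f (s *: u + y).
Proof.
move=> df h0.
pose g := fun t : R => f (t *: u + y).
have dg : forall t : R, is_derive t (1:R) g ('D_u f (t *: u + y)).
  move=> t; apply: DeriveDef; first by rewrite /g derivable_line.
  by rewrite /g derive_line.
have cg : {within `[0, h], continuous g}.
  apply: derivable_within_continuous => t _; exact: ex_derive.
have [c] := MVT h0 (fun t _ => dg t) cg.
rewrite in_itv /= => /andP[c0 ch] E.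
exists c; first by rewrite c0 ch.
by move: E; rewrite /g scale0r add0r subr0 mulrC.
Qed.
End MVTdir.
Section Schwarz.
Variables (R : realType) (V : normedModType R).

Lemma delta_mvt (f : V -> R) u v x (h k : R) :
  (forall z, derivable f z u) -> (forall z, derivable ('D_u f) z v) ->
  0 < h -> 0 < k ->
  exists s, exists t, [/\ 0 < s < h, 0 < t < k &
    f (h *: u + x + k *: v) - f (h *: u + x) - f (x + k *: v) + f x
    = h * k * 'D_v ('D_u f) (t *: v + (s *: u + x))].
Proof.
move=> du duv h0 k0.
pose phi := (fun z => f (z + k *: v)) - f.
have dphi : forall z, derivable phi z u.
  by move=> z; apply: derivableB => //; rewrite derivable_shift.
have Dphi : forall z, 'D_u phi z = 'D_u f (z + k *: v) - 'D_u f z.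
  by move=> z; rewrite deriveB // ?derivable_shift // derive_shift'.
have [s /andP[s0 sh] E1] := mvt_dir x dphi h0.
have [t /andP[t0 tk] E2] := mvt_dir (s *: u + x) duv k0.
exists s, t; split; [by rewrite s0 sh|by rewrite t0 tk|].
move: E1; rewrite Dphi /phi /= => E1.
have -> : f (h *: u + x + k *: v) - f (h *: u + x) - f (x + k *: v) + f x
  = f (h *: u + x + k *: v) - f (h *: u + x) - (f (x + k *: v) - f x) by ring.
rewrite E1 (addrC (s *: u + x)) E2; ring.
Qed.

Lemma contra3 (X a b : R) : X <= a + b -> a < X / 2 -> b < X / 2 -> False.
Proof. move=> *; lra. Qed.

Lemma schwarz (f : V -> R) u v x :
  (forall z, derivable f z u) -> (forall z, derivable f z v) ->
  (forall z, derivable ('D_u f) z v) -> (forall z, derivable ('D_v f) z u) ->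
  {for x, continuous ('D_v ('D_u f))} -> {for x, continuous ('D_u ('D_v f))} ->
  'D_v ('D_u f) x = 'D_u ('D_v f) x.
Proof.
move=> du dv duv dvu cA cB.
set A := 'D_v ('D_u f); set B := 'D_u ('D_v f).
apply/eqP; rewrite -subr_eq0 -normr_eq0; apply/negPn/negP => hne.
have d0 : 0 < `|A x - B x| by rewrite normr_gt0 -normr_eq0.
set d := `|A x - B x| in d0.
have e0 : 0 < d / 2 by rewrite divr_gt0.
have [ea ea0 Ha] := (nbhs_normP _ _).1 ((cvgrPdist_lt _ _).1 cA _ e0).
have [eb eb0 Hb] := (nbhs_normP _ _).1 ((cvgrPdist_lt _ _).1 cB _ e0).
pose e := Num.min ea eb.
have e0' : 0 < e by rewrite lt_min ea0 eb0.
pose h := e / (`|u| + `|v| + 1).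
have nuv : 0 < `|u| + `|v| + 1 by rewrite ltr_wpDl // addr_ge0.
have h0 : 0 < h by rewrite divr_gt0.
have near_x : forall s t, 0 < s < h -> 0 < t < h ->
    `|x - (t *: v + (s *: u + x))| < e.
  move=> s t /andP[s0 sh] /andP[t0 th].
  have -> : x - (t *: v + (s *: u + x)) = - (t *: v + s *: u).
    by rewrite (addrC (s *: u) x) addrA (addrC (t *: v) x) -addrA opprD addrA subrr add0r.
 rewrite normrN.
  apply: (le_lt_trans (ler_normD _ _)); rewrite !normrZ !gtr0_norm //.
  have : t * `|v| + s * `|u| <= h * `|v| + h * `|u|.
    by rewrite lerD // ler_wpM2r // ltW.
  move/le_lt_trans; apply.
  rewrite -mulrDr /h mulrAC ltr_pdivrMr // ltr_pM2l // (addrC `|v|) ltrDl //.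
have near_y : forall s t, 0 < s < h -> 0 < t < h ->
    `|x - (t *: u + (s *: v + x))| < e.
  move=> s t /andP[s0 sh] /andP[t0 th].
  have -> : x - (t *: u + (s *: v + x)) = - (t *: u + s *: v).
    by rewrite (addrC (s *: v) x) addrA (addrC (t *: u) x) -addrA opprD addrA subrr add0r.
 rewrite normrN.
  apply: (le_lt_trans (ler_normD _ _)); rewrite !normrZ !gtr0_norm //.
  have : t * `|u| + s * `|v| <= h * `|u| + h * `|v|.
    by rewrite lerD // ler_wpM2r // ltW.
  move/le_lt_trans; apply.
  rewrite -mulrDr /h mulrAC ltr_pdivrMr // ltr_pM2l // ltrDl //.
have [s [t [hs ht E1]]] := delta_mvt x du duv h0 h0.
have [s' [t' [hs' ht' E2]]] := delta_mvt x dv dvu h0 h0.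
have EE : A (t *: v + (s *: u + x)) = B (t' *: u + (s' *: v + x)).
  apply: (mulfI (mulf_neq0 (lt0r_neq0 h0) (lt0r_neq0 h0))).
  rewrite -E1 -E2.
  have -> : h *: u + x + h *: v = h *: v + x + h *: u.
    by rewrite addrC (addrC (h *: u)) addrA.
  rewrite (addrC x (h *: v)) (addrC x (h *: u)); ring.
have lea : e <= ea by rewrite ge_min lexx.
have leb : e <= eb by rewrite ge_min lexx orbT.
have ha : `|A x - A (t *: v + (s *: u + x))| < d / 2.
  apply: Ha; rewrite /ball_ /=; exact: (lt_le_trans (near_x _ _ hs ht) lea).
have hb : `|B x - B (t' *: u + (s' *: v + x))| < d / 2.
  apply: Hb; rewrite /ball_ /=; exact: (lt_le_trans (near_y _ _ hs' ht') leb).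
have key : forall a b c d : R, c = d -> `|a - b| <= `|a - c| + `|b - d|.
  by move=> a b c d' ->; rewrite (distrC b); exact: ler_distD.
have H1 := key (A x) (B x) _ _ EE.
have d1 : 0 < `|A x - B x| := d0.
have ha' : `|A x - A (t *: v + (s *: u + x))| < `|A x - B x| / 2 := ha.
have hb' : `|B x - B (t' *: u + (s' *: v + x))| < `|A x - B x| / 2 := hb.
exact: (contra3 H1 ha' hb').
Qed.
End Schwarz.
Section MxDeriv.
Variables (R : realType) (V : normedModType R).
Local Open Scope classical_set_scope.

Definition dermx p q (F : V -> 'M[R]_(p, q)) x v :=
  forall a b, derivable (fun y => F y a b) x v.
Definition Dmx p q (F : V -> 'M[R]_(p, q)) x v : 'M[R]_(p, q) :=
  \matrix_(a, b) 'D_v (fun y => F y a b) x.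

Lemma entry_derive p q (F : V -> 'M[R]_(p, q)) x v :
  derivable F x v -> dermx F x v /\ Dmx F x v = 'D_v F x.
Proof.
move=> dF.
have key : forall a b, (fun h : R => h^-1 *: ((fun y => F y a b) \o shift x) (h *: v)
        - h^-1 *: F x a b) = (fun M : 'M[R]_(p, q) => M a b) \o
     (fun h : R => h^-1 *: ((F \o shift x) (h *: v) - F x)).
  by move=> a b; apply/funext => h /=; rewrite !mxE -scalerBr.
have cv : forall a b, (fun h : R => h^-1 *: ((fun y => F y a b) \o shift x) (h *: v)
        - h^-1 *: F x a b) @ 0^' --> 'D_v F x a b.
  move=> a b; rewrite key; apply: continuous_cvg; first exact: coord_continuous.
  exact: dF.
have E : forall a b, (fun h : R => h^-1 *: (((fun y => F y a b) \o shift x) (h *: v)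
        - F x a b)) = (fun h : R => h^-1 *: ((fun y => F y a b) \o shift x) (h *: v)
        - h^-1 *: F x a b).
  by move=> a b; apply/funext => h; rewrite scalerBr.
split.
  by move=> a b; rewrite /derivable E; exact: cvgP (cv a b).
apply/matrixP => a b; rewrite mxE /derive E.
exact: cvg_lim (cv a b).
Qed.

Lemma dermx_cst p q (C : 'M[R]_(p, q)) x v :
  dermx (fun _ => C) x v /\ Dmx (fun _ => C) x v = 0.
Proof.
split; first by move=> a b; exact: derivable_cst.
by apply/matrixP => a b; rewrite !mxE derive_cst.
Qed.

Lemma dermxM p q r (F : V -> 'M[R]_(p, q)) (H : V -> 'M[R]_(q, r)) x v :
  dermx F x v -> dermx H x v ->
  dermx (fun y => F y *m H y) x v /\
  Dmx (fun y => F y *m H y) x v = Dmx F x v *m H x + F x *m Dmx H x v.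
Proof.
move=> dF dH.
have E : forall a b, (fun y => (F y *m H y) a b)
    = \sum_(k < q) (fun y => F y a k * H y k b).
  by move=> a b; rewrite fct_sumE; apply/funext => y; rewrite mxE.
have dk : forall a b (k : 'I_q), derivable (fun y => F y a k * H y k b) x v.
  by move=> a b k; apply: derivableM.
split.
  by move=> a b; rewrite E; apply: derivable_sum.
apply/matrixP => a b; rewrite !mxE E derive_sum // -big_split /=.
apply: eq_bigr => k _.
rewrite (deriveM (dF a k) (dH k b)) !mxE.
by rewrite /GRing.scale /= addrC mulrC [_ * H x k b]mulrC.
Qed.

Lemma dermx_tr p (F : V -> 'M[R]_p) x v :
  dermx F x v -> derivable (fun y => \tr (F y)) x v /\
  'D_v (fun y => \tr (F y)) x = \tr (Dmx F x v).
Proof.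
move=> dF.
have E : (fun y => \tr (F y)) = \sum_(k < p) (fun y => F y k k).
  by rewrite fct_sumE; apply/funext => y.
rewrite E; split; first by apply: derivable_sum.
rewrite derive_sum //; apply: eq_bigr => k _; by rewrite mxE.
Qed.
End MxDeriv.
Require Import Defs.
From HB Require Import structures.
From mathcomp Require Import all_boot all_order all_algebra.
From mathcomp Require Import all_classical all_reals all_analysis.
From mathcomp Require Import ring lra.
Set Implicit Arguments. Unset Strict Implicit. Unset Printing Implicit Defensive.
Import Order.TTheory GRing.Theory Num.Theory.
Import numFieldNormedType.Exports.
Local Open Scope ring_scope.

Local Open Scope nat_scope.
Definition datom (a : nat) (c : seq nat) : seq nat :=
  match c with
  | [:: 0; b; c'] => [:: 1; a; b; c']
  | [:: 1; a'; b; c'] => [:: 2; a; a'; b; c']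
  | _ => [:: 9]
  end.
Definition isJ (c : seq nat) : bool := if c is [:: 3; _] then true else false.
Fixpoint dmon (a : nat) (m : seq (seq nat)) : seq (seq (seq nat)) :=
  match m with
  | [::] => [::]
  | c :: m' => (if isJ c then [::] else [:: datom a c :: m'])
                 ++ map (cons c) (dmon a m')
  end.
Definition dpoly (a : nat) (p : seq (bool * seq (seq nat))) :=
  flatten [seq [seq (t.1, m') | m' <- dmon a t.2] | t <- p].
Definition good (c : seq nat) : bool :=
  match c with
  | [:: 0; b; c'] => [&& b < 4, c' < 4 & b != c']
  | [:: 1; a; b; c'] => [&& a < 4, b < 4, c' < 4 & b != c']
  | [:: 3; a] => true
  | _ => false
  end.
Definition catom (c : seq nat) : seq nat :=
  match c with
  | [:: 2; a; a'; b; c'] =>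
      if [&& a < 4, a' < 4, b < 4, c' < 4 & b != c']
      then (if a <= a' then c else [:: 2; a'; a; b; c']) else c
  | _ => c
  end.
Fixpoint lexn (s t : seq nat) : bool :=
  match s, t with
  | [::], _ => true
  | _ :: _, [::] => false
  | x :: s', y :: t' => (x < y) || ((x == y) && lexn s' t')
  end.
Definition code (m : seq (seq nat)) : seq nat := flatten [seq c ++ [:: 100] | c <- m].
Definition rots (m : seq (seq nat)) := [seq rot k m | k <- iota 0 (size m)].
Definition canonm (m : seq (seq nat)) : seq (seq nat) :=
  foldr (fun r best => if lexn (code r) (code best) then r else best) m (rots m).
Definition cm (m : seq (seq nat)) := canonm (map catom m).
Definition negp (p : seq (bool * seq (seq nat))) := [seq (~~ t.1, t.2) | t <- p].
Definition checkp (p : seq (bool * seq (seq nat))) : bool :=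
  perm_eq [seq cm t.2 | t <- p & ~~ t.1] [seq cm t.2 | t <- p & t.1].

Definition L2 (a b c : nat) : seq (bool * seq (seq nat)) :=
  [:: (false, [:: [:: 0; a; b]; [:: 3; a]; [:: 1; c; b; a]; [:: 3; b]]);
      (true,  [:: [:: 1; c; a; b]; [:: 3; a]; [:: 0; b; a]; [:: 3; b]]);
      (false, [:: [:: 0; b; c]; [:: 3; b]; [:: 1; a; c; b]; [:: 3; c]]);
      (true,  [:: [:: 1; a; b; c]; [:: 3; b]; [:: 0; c; b]; [:: 3; c]]);
      (false, [:: [:: 0; c; a]; [:: 3; c]; [:: 1; b; a; c]; [:: 3; a]]);
      (true,  [:: [:: 1; b; c; a]; [:: 3; c]; [:: 0; a; c]; [:: 3; a]]);
      (true,  [:: [:: 0; a; b]; [:: 3; a]; [:: 0; c; a]; [:: 3; c]; [:: 0; b; c]; [:: 3; b]]);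
      (true,  [:: [:: 0; a; b]; [:: 3; a]; [:: 0; c; a]; [:: 3; c]; [:: 0; b; c]; [:: 3; b]]);
      (false, [:: [:: 0; b; a]; [:: 3; b]; [:: 0; c; b]; [:: 3; c]; [:: 0; a; c]; [:: 3; a]]);
      (false, [:: [:: 0; b; a]; [:: 3; b]; [:: 0; c; b]; [:: 3; c]; [:: 0; a; c]; [:: 3; a]])].

(* words: factor [:: 0; a; b; c] = Gamma_{a;b,c}, [:: 1; a] = J_a *)
Definition gw (a b c d : nat) := [:: [:: 0; a; b; c]; [:: 1; b]; [:: 0; d; c; b]; [:: 1; c]].
Definition tsyn : seq (bool * seq (seq nat)) :=
  [:: (false, gw 2 0 1 3); (true, gw 3 0 1 2); (true, gw 1 0 2 3); (false, gw 3 0 2 1);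
      (false, gw 1 0 3 2); (true, gw 2 0 3 1); (false, gw 0 1 2 3); (true, gw 3 1 2 0);
      (true, gw 0 1 3 2); (false, gw 2 1 3 0); (false, gw 0 2 3 1); (true, gw 1 2 3 0)].
Definition fexp (f : seq nat) : seq (bool * seq (seq nat)) :=
  match f with
  | [:: 0; a; b; c] => [:: (false, [:: [:: 1; a; b; c]]); (true, [:: [:: 0; a; c]; [:: 3; a]; [:: 0; b; a]])]
  | [:: 1; a] => [:: (false, [:: [:: 3; a]])]
  | _ => [::]
  end.
Fixpoint wexp (w : seq (seq nat)) : seq (bool * seq (seq nat)) :=
  match w with
  | [::] => [:: (false, [::])]
  | f :: w' => flatten [seq [seq (xorb s.1 t.1, s.2 ++ t.2) | t <- wexp w'] | s <- fexp f]
  end.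
Definition rhsp := flatten [seq [seq (xorb w.1 t.1, t.2) | t <- wexp w.2] | w <- tsyn].
Definition bigL := dpoly 0 (L2 1 2 3) ++ negp (dpoly 1 (L2 0 2 3)) ++ dpoly 2 (L2 0 1 3)
                   ++ negp (dpoly 3 (L2 0 1 2)).
Definition total := bigL ++ negp (rhsp ++ rhsp).

Local Open Scope ring_scope.
Lemma total_check : checkp total.
Proof. by vm_compute. Qed.
Require Import Defs.
From HB Require Import structures.
From mathcomp Require Import all_boot all_order all_algebra.
From mathcomp Require Import all_classical all_reals all_analysis.
From mathcomp Require Import ring lra.
Set Implicit Arguments. Unset Strict Implicit. Unset Printing Implicit Defensive.
Import Order.TTheory GRing.Theory Num.Theory.
Import numFieldNormedType.Exports.
Local Open Scope ring_scope.

Lemma pd_comm (R : realType) (n N : nat) (F : 'rV[R]_n -> 'M[R]_N) a b x :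
  smooth F -> pd a (pd b F) x = pd b (pd a F) x.
Proof.
move=> sm; apply/matrixP => r s.
pose f := fun y => F y r s.
have Eb : (fun y => pd b F y r s) = 'D_(ev R b) f.
  apply/funext => y; rewrite /pd.
  by rewrite -(entry_derive ((sm [::]).2 b y)).2 mxE.
have Ea : (fun y => pd a F y r s) = 'D_(ev R a) f.
  apply/funext => y; rewrite /pd.
  by rewrite -(entry_derive ((sm [::]).2 a y)).2 mxE.
have L1 : pd a (pd b F) x r s = 'D_(ev R a) ('D_(ev R b) f) x.
  rewrite /pd -(entry_derive ((sm [:: b]).2 a x)).2 mxE.
  by rewrite -Eb.
have L2 : pd b (pd a F) x r s = 'D_(ev R b) ('D_(ev R a) f) x.
  rewrite /pd -(entry_derive ((sm [:: a]).2 b x)).2 mxE.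
  by rewrite -Ea.
apply: (etrans L1); apply: (etrans _ (esym L2)).
apply: (@schwarz R _ f (ev R b) (ev R a) x).
- by move=> z; exact: (entry_derive ((sm [::]).2 b z)).1.
- by move=> z; exact: (entry_derive ((sm [::]).2 a z)).1.
- by move=> z; rewrite -Eb; exact: (entry_derive ((sm [:: b]).2 a z)).1.
- by move=> z; rewrite -Ea; exact: (entry_derive ((sm [:: a]).2 b z)).1.
- have -> : 'D_(ev R a) ('D_(ev R b) f) = (fun M : 'M[R]_N => M r s) \o pds [:: a; b] F.
    apply/funext => y /=; rewrite -Eb.
    by rewrite /pd -(entry_derive ((sm [:: b]).2 a y)).2 mxE.
  apply: continuous_comp; first exact: (sm [:: a; b]).1.
  exact: coord_continuous.
- have -> : 'D_(ev R b) ('D_(ev R a) f) = (fun M : 'M[R]_N => M r s) \o pds [:: b; a] F.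
    apply/funext => y /=; rewrite -Ea.
    by rewrite /pd -(entry_derive ((sm [:: a]).2 b y)).2 mxE.
  apply: continuous_comp; first exact: (sm [:: b; a]).1.
  exact: coord_continuous.
Qed.

Arguments pd : simpl never.
Arguments derive : simpl never.
Section Sem.
Variables (R : realType) (n N : nat) (i j k l : 'I_n).
Variables (J : 'I_n -> 'M[R]_N) (G : 'I_n -> 'I_n -> 'rV[R]_n -> 'M[R]_N).

Definition idx (a : nat) : 'I_n := nth i [:: i; j; k; l] a.
Definition eval_atom (x : 'rV[R]_n) (c : seq nat) : 'M[R]_N :=
  match c with
  | [:: 0%N; b; c'] => G (idx b) (idx c') x
  | [:: 1%N; a; b; c'] => pd (idx a) (G (idx b) (idx c')) x
  | [:: 2%N; a; a'; b; c'] => pd (idx a) (pd (idx a') (G (idx b) (idx c'))) x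
  | [:: 3%N; a] => J (idx a)
  | _ => 0
  end.
Definition prodm x (m : seq (seq nat)) := foldr (fun c M => eval_atom x c *m M) 1%:M m.
Definition evm x m := \tr (prodm x m).
Definition sgn (b : bool) (r : R) := if b then - r else r.
Definition evp x (p : seq (bool * seq (seq nat))) := \sum_(t <- p) sgn t.1 (evm x t.2).

Hypothesis Hinj : forall b c, (b < 4)%N -> (c < 4)%N -> b != c -> idx b != idx c.
Hypothesis Hsm : forall a b, a != b -> smooth (G a b).

Lemma prodm_cons x c m : prodm x (c :: m) = eval_atom x c *m prodm x m.
Proof. by []. Qed.

Lemma prodm_cat x m1 m2 : prodm x (m1 ++ m2) = prodm x m1 *m prodm x m2.
Proof.
elim: m1 => [|c m1 IH]; first by rewrite mul1mx.
by rewrite cat_cons !prodm_cons IH mulmxA.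
Qed.

Lemma evm_rot x s m : evm x (rot s m) = evm x m.
Proof.
rewrite /evm /rot prodm_cat mxtrace_mulC -prodm_cat.
by rewrite cat_take_drop.
Qed.

Lemma canonm_sound x m : evm x (canonm m) = evm x m.
Proof.
rewrite /canonm.
have : forall r, r \in rots m -> evm x r = evm x m.
  move=> r /mapP [s _ ->]; exact: evm_rot.
elim: (rots m) => [|r L IH] H //=.
case: ifP => _; first by apply: H; rewrite inE eqxx.
by apply: IH => r' hr'; apply: H; rewrite inE hr' orbT.
Qed.

Lemma catom_sound x c : eval_atom x (catom c) = eval_atom x c.
Proof.
case: c => [|t c] //; case: t => [|[|[|t]]] //.
case: c => [|a [|a' [|b [|c' [|? ?]]]]] //.
rewrite /catom; case: ifP => [/and5P [ha ha' hb hc hbc]|_]; last by [].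
case: ifP => _; first by [].
exact: (pd_comm _ _ _ (Hsm (Hinj hb hc hbc))).
Qed.


Lemma cm_sound x m : evm x (cm m) = evm x m.
Proof.
rewrite /cm canonm_sound /evm; congr (\tr _).
elim: m => [|c m IH] //.
by rewrite map_cons !prodm_cons IH catom_sound.
Qed.

Lemma evp_split x p : evp x p =
  \sum_(m <- [seq t.2 | t <- p & ~~ t.1]) evm x m -
  \sum_(m <- [seq t.2 | t <- p & t.1]) evm x m.
Proof.
elim: p => [|[b m] p IH]; first by rewrite /evp !big_nil subr0.
rewrite /evp big_cons -/(evp x p) IH.
by case: b => /=; rewrite !big_cons /=; ring.
Qed.

Lemma checkp_sound x p : checkp p -> evp x p = 0.
Proof.
move=> hp; rewrite evp_split.
have E : forall b : bool, \sum_(m <- [seq t.2 | t <- p & b == t.1]) evm x m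
    = \sum_(m <- [seq cm t.2 | t <- p & b == t.1]) evm x m.
  move=> b; rewrite (_ : [seq cm t.2 | t <- p & b == t.1] = map cm [seq t.2 | t <- p & b == t.1]); last by rewrite -map_comp.
  by rewrite [in RHS]big_map; apply: eq_bigr => m _; rewrite cm_sound.
have E1 := E false; have E2 := E true.
have F1 : [seq t <- p | false == t.1] = [seq t <- p | ~~ t.1].
  by apply: eq_filter => -[[] ?].
have F2 : [seq t <- p | true == t.1] = [seq t <- p | t.1].
  by apply: eq_filter => -[[] ?].
rewrite F1 in E1; rewrite F2 in E2.
rewrite E1 E2 (perm_big _ hp) subrr.
by [].
Qed.

Lemma datom_ok a x c : good c ->
  dermx (fun y => eval_atom y c) x (ev R (idx a)) /\
  Dmx (fun y => eval_atom y c) x (ev R (idx a)) =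
    (if isJ c then 0 else eval_atom x (datom a c)).
Proof.
case: c => [|t c]; first by move=> H; discriminate H.
case: t => [|[|[|[|t]]]].
- case: c => [|b [|c' [|? ?]]]; try by move=> H; discriminate H.
  move=> /and3P [hb hc hbc].
  have sm := Hsm (Hinj hb hc hbc).
  exact: (entry_derive ((sm [::]).2 (idx a) x)).
- case: c => [|a' [|b [|c' [|? ?]]]]; try by move=> H; discriminate H.
  move=> /and4P [ha' hb hc hbc].
  have sm := Hsm (Hinj hb hc hbc).
  exact: (entry_derive ((sm [:: idx a']).2 (idx a) x)).
- by move=> H; discriminate H.
- case: c => [|a' [|? ?]]; try by move=> H; discriminate H.
  move=> _; exact: (dermx_cst (J (idx a')) x (ev R (idx a))).
- by move=> H; discriminate H.
Qed.

Lemma dprodm a x m : all good m ->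
  dermx (fun y => prodm y m) x (ev R (idx a)) /\
  Dmx (fun y => prodm y m) x (ev R (idx a)) = \sum_(m' <- dmon a m) prodm x m'.
Proof.
elim: m => [|c m IH].
  move=> _; have [d D] := dermx_cst (1%:M : 'M[R]_N) x (ev R (idx a)).
  by split; [exact: d| rewrite big_nil; exact: D].
move=> /andP [gc gm]; have [d1 D1] := datom_ok a x gc.
have [d2 D2] := IH gm.
have [d3 D3] := dermxM d1 d2.
split; first exact: d3.
have -> : Dmx (fun y => prodm y (c :: m)) x (ev R (idx a)) =
   Dmx (fun y => eval_atom y c *m prodm y m) x (ev R (idx a)) by [].
rewrite D3 D1 D2.
have -> : dmon a (c :: m) = (if isJ c then [::] else [:: datom a c :: m])
                 ++ map (cons c) (dmon a m) by [].
rewrite big_cat big_map /= -mulmx_sumr.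
case: (isJ c); first by rewrite mul0mx add0r big_nil add0r.
by rewrite big_cons big_nil addr0.
Qed.

Lemma devm a x m : all good m ->
  derivable (fun y => evm y m) x (ev R (idx a)) /\
  'D_(ev R (idx a)) (fun y => evm y m) x = \sum_(m' <- dmon a m) evm x m'.
Proof.
move=> gm; have [d D] := dprodm a x gm.
have [t T] := dermx_tr d.
split; first exact: t.
by rewrite T D raddf_sum.
Qed.

Lemma evp_cat x p q : evp x (p ++ q) = evp x p + evp x q.
Proof. by rewrite /evp big_cat. Qed.

Lemma evp_neg x p : evp x (negp p) = - evp x p.
Proof.
rewrite /evp /negp big_map -sumrN; apply: eq_bigr => -[b m] _ /=.
by case: b => //=; rewrite opprK.
Qed.

Lemma devp a x p : all (fun t => all good t.2) p ->
  derivable (fun y => evp y p) x (ev R (idx a)) /\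
  'D_(ev R (idx a)) (fun y => evp y p) x = evp x (dpoly a p).
Proof.
elim: p => [|[b m] p IH].
  move=> _; rewrite (_ : (fun y => evp y [::]) = cst 0); last first.
    by apply/funext => y; rewrite /evp big_nil.
  split; first exact: derivable_cst.
  by rewrite derive_cst /evp /dpoly /= big_nil.
move=> /andP [/= gm gp]; have [d1 D1] := IH gp.
have [d0 D0] := devm a x gm.
have [ds Ds] : derivable (fun y => sgn b (evm y m)) x (ev R (idx a)) /\
    'D_(ev R (idx a)) (fun y => sgn b (evm y m)) x =
    sgn b (\sum_(m' <- dmon a m) evm x m').
  case: b => /=; last by split.
  rewrite (_ : (fun y => - evm y m) = - (fun y => evm y m)) //.
  by split; [exact: derivableN | rewrite deriveN // D0].
rewrite (_ : (fun y => evp y ((b, m) :: p)) =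
   (fun y => sgn b (evm y m)) + (fun y => evp y p)); last first.
  by apply/funext => y; rewrite /evp big_cons.
split; first exact: derivableD.
rewrite deriveD // Ds D1.
have -> : dpoly a ((b, m) :: p) = [seq (b, m') | m' <- dmon a m] ++ dpoly a p by [].
rewrite evp_cat; congr (_ + _).
rewrite /evp big_map /=; case: b {ds Ds} => //=.
by rewrite sumrN.
Qed.

Lemma Lhelper (A B C D E F P Q : R) : 2^-1 * (A - B + C - D + E - F) + (- P - - Q) =
  2^-1 * (A + (- B + (C + (- D + (E + (- F + (- P + (- P + (Q + (Q + 0)))))))))).
Proof. rewrite addr0. lra. Qed.

Lemma Lcoef_evp a b c : Lcoef J G (idx a) (idx b) (idx c) = fun x => 2^-1 * evp x (L2 a b c).
Proof.
apply/funext => x.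
rewrite /Lcoef /evp /L2 !big_cons big_nil /sgn /evm /prodm /=.
rewrite !mulmx1 !mulmxA !raddfD !raddfN /=.
apply: Lhelper.
Qed.
End Sem.
Require Import Defs.
From HB Require Import structures.
From mathcomp Require Import all_boot all_order all_algebra.
From mathcomp Require Import all_classical all_reals all_analysis.
From mathcomp Require Import ring lra.
Set Implicit Arguments. Unset Strict Implicit. Unset Printing Implicit Defensive.
Import Order.TTheory GRing.Theory Num.Theory.
Import numFieldNormedType.Exports.
Local Open Scope ring_scope.
Arguments pd : simpl never.
Arguments derive : simpl never.

Definition validf (f : seq nat) : bool :=
  match f with [:: 0; _; _; _] => true | [:: 1; _] => true | _ => false end%N.

Section Words.
Variables (R : realType) (n N : nat) (i j k l : 'I_n).
Variables (J : 'I_n -> 'M[R]_N) (G : 'I_n -> 'I_n -> 'rV[R]_n -> 'M[R]_N).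

Local Notation idx := (idx i j k l).
Local Notation prodm := (prodm i j k l J G).
Local Notation evm := (evm i j k l J G).
Local Notation evp := (evp i j k l J G).

Definition tf (f : seq nat) : trfactor n :=
  match f with
  | [:: 0%N; a; b; c] => FGam (idx a) (idx b) (idx c)
  | [:: 1%N; a] => FJ (idx a)
  | _ => FJ i
  end.
Definition sgnm (b : bool) (M : 'M[R]_N) := if b then - M else M.
Definition ts : seq (R * seq (trfactor n)) := [seq (sgn w.1 1, map tf w.2) | w <- tsyn].

Lemma tf_ok x f : validf f ->
  eval_factor J G x (tf f) = \sum_(t <- fexp f) sgnm t.1 (prodm x t.2).
Proof.
case: f => [|t f] //; case: t => [|[|t]] //.
  case: f => [|a [|b [|c [|? ?]]]] // _.
  rewrite !big_cons big_nil /sgnm /=.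
  rewrite /prodm /=.
  by rewrite !mulmx1 addr0 !mulmxA.
case: f => [|a [|? ?]] // _.
by rewrite big_cons big_nil /sgnm /= /prodm /= mulmx1 addr0.
Qed.

Lemma wexp_ok x w : all validf w ->
  eval_word J G x (map tf w) = \sum_(t <- wexp w) sgnm t.1 (prodm x t.2).
Proof.
elim: w => [|f w IH].
  by move=> _; rewrite big_cons big_nil addr0.
move=> /andP [vf vw].
have -> : eval_word J G x (map tf (f :: w)) =
  eval_factor J G x (tf f) *m eval_word J G x (map tf w) by [].
rewrite tf_ok // IH // mulmx_suml.
have -> : wexp (f :: w) = flatten [seq [seq (xorb s.1 t.1, s.2 ++ t.2) | t <- wexp w] | s <- fexp f] by [].
rewrite big_flatten big_map; apply: eq_bigr => s _.
rewrite big_map mulmx_sumr; apply: eq_bigr => t _.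
rewrite prodm_cat /sgnm.
by case: s.1; case: t.1 => /=; rewrite ?mulNmx ?mulmxN ?opprK.
Qed.

Lemma rhs_ok x ws : all (fun w => all validf w.2) ws ->
  \sum_(t <- [seq (sgn w.1 1, map tf w.2) | w <- ws]) t.1 * \tr (eval_word J G x t.2)
  = evp x (flatten [seq [seq (xorb w.1 t.1, t.2) | t <- wexp w.2] | w <- ws]).
Proof.
elim: ws => [|[b w] ws IH]; first by rewrite /evp !big_nil.
move=> /andP [/= vw vws].
rewrite big_cons IH // /=.
have -> : forall p q, evp x (p ++ q) = evp x p + evp x q by move=> p q; exact: evp_cat.
congr (_ + _).
rewrite wexp_ok // raddf_sum mulr_sumr /evp big_map; apply: eq_bigr => t _.
rewrite /sgnm /sgn /=.
by case: b; case: t.1 => /=; rewrite ?raddfN ?mulN1r ?mul1r ?opprK.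
Qed.
End Words.
Require Import Defs.
From HB Require Import structures.
From mathcomp Require Import all_boot all_order all_algebra.
From mathcomp Require Import all_classical all_reals all_analysis.
From mathcomp Require Import ring lra.
Import Order.TTheory GRing.Theory Num.Theory.
Import numFieldNormedType.Exports.
Local Open Scope ring_scope.
Arguments pd : simpl never.
Arguments derive : simpl never.

Lemma dscale (R : realType) (V : normedModType R) (f : V -> R) (c : R) x v :
  derivable f x v -> 'D_v (fun y => c * f y) x = c * 'D_v f x.
Proof.
move=> df; rewrite (_ : (fun y => c * f y) = c *: f) //.
by rewrite deriveZ.
Qed.

Lemma eval_word_zero (R : realType) (n N : nat) (J : 'I_n -> 'M[R]_N)
  (G : 'I_n -> 'I_n -> 'rV[R]_n -> 'M[R]_N) x (w : seq (trfactor n)) :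
  (forall a b c, a != b -> b != c -> a != c -> forall x, Gam J G a b c x = 0) ->
  all (fun f => match f with FGam a b c => [&& a != b, b != c & a != c] | FJ _ => true end) w ->
  has (@is_gam n) w -> eval_word J G x w = 0.
Proof.
move=> Hg; elim: w => [|f w IH] //= /andP [hf hw] hh.
case: f hf hh => [a b c|a] /=.
  by move=> /and3P [hab hbc hac] _; rewrite Hg // mul0mx.
by move=> _ hh; rewrite IH // mulmx0.
Qed.

Lemma sum_all0 (R : realType) (T : Type) (P : pred T) (F : T -> R) (s : seq T) :
  all P s -> (forall t, P t -> F t = 0) -> \sum_(t <- s) F t = 0.
Proof.
move=> hs hF; elim: s hs => [|t s IH]; first by rewrite big_nil.
by move=> /andP [pt ps]; rewrite big_cons hF // IH // addr0.
Qed.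

Section Main.
Variables (R : realType) (n N : nat) (i j k l : 'I_n).
Variables (J : 'I_n -> 'M[R]_N) (G : 'I_n -> 'I_n -> 'rV[R]_n -> 'M[R]_N).
Hypothesis Hinj : forall b c, (b < 4)%N -> (c < 4)%N -> b != c -> idx i j k l b != idx i j k l c.
Hypothesis Hsm : forall a b, a != b -> smooth (G a b).

Lemma evp_4 x A B C D : evp i j k l J G x (A ++ negp B ++ C ++ negp D) =
  evp i j k l J G x A - evp i j k l J G x B + evp i j k l J G x C - evp i j k l J G x D.
Proof. rewrite !evp_cat !evp_neg; ring. Qed.

Lemma d3_evp x : d3coef (Lcoef J G) i j k l x = 2^-1 * evp i j k l J G x bigL.
Proof.
rewrite /d3coef.
have E1 : Lcoef J G j k l = fun y => 2^-1 * evp i j k l J G y (L2 1 2 3) := Lcoef_evp i j k l J G 1 2 3.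
have E2 : Lcoef J G i k l = fun y => 2^-1 * evp i j k l J G y (L2 0 2 3) := Lcoef_evp i j k l J G 0 2 3.
have E3 : Lcoef J G i j l = fun y => 2^-1 * evp i j k l J G y (L2 0 1 3) := Lcoef_evp i j k l J G 0 1 3.
have E4 : Lcoef J G i j k = fun y => 2^-1 * evp i j k l J G y (L2 0 1 2) := Lcoef_evp i j k l J G 0 1 2.
rewrite E1 E2 E3 E4 /pd.
have P0 : derivable (fun y => evp i j k l J G y (L2 1 2 3)) x (ev R i) /\
  'D_(ev R i) (fun y => evp i j k l J G y (L2 1 2 3)) x = evp i j k l J G x (dpoly 0 (L2 1 2 3))
  := devp J Hinj Hsm 0 x (isT : all (fun t => all good t.2) (L2 1 2 3)).
have P1 : derivable (fun y => evp i j k l J G y (L2 0 2 3)) x (ev R j) /\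
  'D_(ev R j) (fun y => evp i j k l J G y (L2 0 2 3)) x = evp i j k l J G x (dpoly 1 (L2 0 2 3))
  := devp J Hinj Hsm 1 x (isT : all (fun t => all good t.2) (L2 0 2 3)).
have P2 : derivable (fun y => evp i j k l J G y (L2 0 1 3)) x (ev R k) /\
  'D_(ev R k) (fun y => evp i j k l J G y (L2 0 1 3)) x = evp i j k l J G x (dpoly 2 (L2 0 1 3))
  := devp J Hinj Hsm 2 x (isT : all (fun t => all good t.2) (L2 0 1 3)).
have P3 : derivable (fun y => evp i j k l J G y (L2 0 1 2)) x (ev R l) /\
  'D_(ev R l) (fun y => evp i j k l J G y (L2 0 1 2)) x = evp i j k l J G x (dpoly 3 (L2 0 1 2))
  := devp J Hinj Hsm 3 x (isT : all (fun t => all good t.2) (L2 0 1 2)).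
rewrite (@dscale _ _ _ (2^-1) _ _ P0.1) P0.2 (@dscale _ _ _ (2^-1) _ _ P1.1) P1.2 (@dscale _ _ _ (2^-1) _ _ P2.1) P2.2 (@dscale _ _ _ (2^-1) _ _ P3.1) P3.2.
have EB := evp_4 x (dpoly 0 (L2 1 2 3)) (dpoly 1 (L2 0 2 3)) (dpoly 2 (L2 0 1 3)) (dpoly 3 (L2 0 1 2)).
rewrite /bigL EB.
ring.
Qed.
End Main.

Unset Implicit Arguments.
Theorem theorem5p1 (R : realType) (n N : nat) (i j k l : 'I_n)
    (hij : (i < j)%N) (hjk : (j < k)%N) (hkl : (k < l)%N) :
  exists ts : seq (R * seq (trfactor n)),
    all (fun t => admissible i j k l t.2) ts /\
    forall (J : 'I_n -> 'M[R]_N) (G : 'I_n -> 'I_n -> 'rV[R]_n -> 'M[R]_N),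
      (forall a b, J a *m J b = J b *m J a) ->
      (forall a b, a != b -> smooth (G a b)) ->
      (forall x, d3coef (Lcoef J G) i j k l x
                 = \sum_(t <- ts) t.1 * \tr (eval_word J G x t.2)) /\
      ((forall a b c, a != b -> b != c -> a != c ->
          forall x, Gam J G a b c x = 0) ->
       forall x, d3coef (Lcoef J G) i j k l x = 0).
Proof.
have hik : (i < k)%N := ltn_trans hij hjk.
have hil : (i < l)%N := ltn_trans hik hkl.
have hjl : (j < l)%N := ltn_trans hjk hkl.
have nij : i != j by apply/eqP => E; move: hij; rewrite E ltnn.
have nik : i != k by apply/eqP => E; move: hik; rewrite E ltnn.
have nil : i != l by apply/eqP => E; move: hil; rewrite E ltnn.
have njk : j != k by apply/eqP => E; move: hjk; rewrite E ltnn.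
have njl : j != l by apply/eqP => E; move: hjl; rewrite E ltnn.
have nkl : k != l by apply/eqP => E; move: hkl; rewrite E ltnn.
have nji : j != i by rewrite eq_sym.
have nki : k != i by rewrite eq_sym.
have nli : l != i by rewrite eq_sym.
have nkj : k != j by rewrite eq_sym.
have nlj : l != j by rewrite eq_sym.
have nlk : l != k by rewrite eq_sym.
have Hinj : forall b c, (b < 4)%N -> (c < 4)%N -> b != c -> idx i j k l b != idx i j k l c.
  by move=> [|[|[|[|b]]]] [|[|[|[|c]]]].
have Hadm : all (fun t => admissible i j k l t.2) (ts R i j k l).
  rewrite /ts /tsyn /admissible /=.
  by rewrite !inE !eqxx ?orbT /= nij nik nil njk njl nkl nji nki nli nkj nlj nlk.
exists (ts R i j k l); split; first exact: Hadm.
move=> J G HJ HG.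
have ident : forall x, d3coef (Lcoef J G) i j k l x
    = \sum_(t <- ts R i j k l) t.1 * \tr (eval_word J G x t.2).
  move=> x; rewrite (@d3_evp R n N i j k l J G Hinj HG x) /ts (rhs_ok i j k l J G x (ws:=tsyn) isT).
  have H := checkp_sound J Hinj HG x total_check.
  move: H; rewrite /total evp_cat evp_neg evp_cat -/rhsp => H.
  lra.
split; first exact: ident.
move=> Hg x; rewrite ident; apply: (@sum_all0 R _ _ (fun t => t.1 * \tr (eval_word J G x t.2)) _ Hadm) => t.
rewrite /admissible => /andP [/eqP c2 al].
rewrite (@eval_word_zero R n N J G x t.2 Hg) ?mxtrace0 ?mulr0 //.
  apply: sub_all al => -[a b c|a] //= /andP [_ /andP [_ /andP [_ H]]]; exact: H.
by rewrite has_count c2.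
Qed.
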